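(* Let $j\in\mathbb{N}\cup\{0\}$, $M>0$. Let $\{h_n\}_{n\ge0}$ be the orthonormal Hermite polynomials with respect to $e^{-x^2}$ on $\mathbb{R}$, let $\lambda_n=2n$, $K_n^{(j,j)}(0,0)=\sum_{i=0}^n\big(h_i^{(j)}(0)\big)^2$, and for $n\ge1$ define $$\widetilde\lambda_{j+2n}=\lambda_{j+2n}+M\sum_{i=1}^n(\lambda_{j+2i}-\lambda_{j+2i-2})K_{j+2i-1}^{(j,j)}(0,0).$$ Then: if $j=2r$, $$\lim_{n\to+\infty}\frac{\widetilde\lambda_{2r+2n}}{n^{2r+3/2}}=\frac{M2^{4r+1}}{\pi(r+3/4)(2r+1/2)};$$ if $j=2r+1$, $$\lim_{n\to+\infty}\frac{\widetilde\lambda_{2r+1+2n}}{n^{2r+5/2}}=\frac{M2^{4r+3}}{\pi(r+5/4)(2r+3/2)}.$$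
   Context: Background: $\lambda_n=2n$ are the eigenvalues of the Hermite equation $-y''+2xy'=2ny$, and $\widetilde\lambda_{j+2n}$ are eigenvalues of the differential operator $\mathbf{L}$ having as eigenfunctions the polynomials orthonormal with respect to $(f,g)=\int_{\mathbb{R}} fg\,e^{-x^2}dx+Mf^{(j)}(0)g^{(j)}(0)$. *)

(* Defs.v *)
From HB Require Import structures.
From mathcomp Require Import all_boot all_order all_algebra.
From mathcomp Require Import all_classical all_reals all_analysis.
Set Implicit Arguments. Unset Strict Implicit. Unset Printing Implicit Defensive.
Import Order.TTheory GRing.Theory Num.Theory.
Local Open Scope ring_scope.

Fixpoint hermite_pair (R : realType) (n : nat) : {poly R} * {poly R} :=
  match n with
  | 0%N => (1, 2%:R *: 'X)
  | m.+1 => let: (a, b) := hermite_pair R m in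
            (b, 2%:R *: ('X * b) - (2 * m.+1)%:R *: a)
  end.

Definition hermiteH (R : realType) (n : nat) : {poly R} := (hermite_pair R n).1.

(* Orthonormal Hermite polynomials: h_n = H_n / sqrt(2^n n! sqrt(pi)),
   since int_R H_n^2 e^{-x^2} dx = 2^n n! sqrt(pi). *)
Definition hermite_on (R : realType) (n : nat) : {poly R} :=
  (Num.sqrt (2%:R ^+ n * (n`!)%:R * Num.sqrt (pi : R)))^-1 *: hermiteH R n.

Definition Kjj (R : realType) (j n : nat) : R :=
  \sum_(i < n.+1) (((hermite_on R i)^`(j)).[0]) ^+ 2.

Definition lambdaH (R : realType) (n : nat) : R := (2 * n)%:R.

Definition lambda_tilde (R : realType) (M : R) (j n : nat) : R :=
  lambdaH R (j + 2 * n) +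
  M * \sum_(1 <= i < n.+1)
        (lambdaH R (j + 2 * i) - lambdaH R (j + 2 * i - 2)) * Kjj R j (j + 2 * i - 1).

(* Main.v *)
Require Import Defs.
From HB Require Import structures.
From mathcomp Require Import all_boot all_order all_algebra.
From mathcomp Require Import all_classical all_reals all_analysis.
Import Order.TTheory GRing.Theory Num.Theory numFieldNormedType.Exports.
Local Open Scope classical_set_scope.
Local Open Scope ring_scope.
From mathcomp Require Import ring lra zify.
Ltac sh := match goal with |- ?g => idtac g end.

Set Implicit Arguments. Unset Strict Implicit. Unset Printing Implicit Defensive.

Section Herm.
Variable R : realType.
Local Notation H := (hermiteH R).

Lemma hpair2 n : (hermite_pair R n).2 = H n.+1.
Proof. by rewrite /hermiteH /=; case: (hermite_pair R n). Qed.

Lemma H0 : H 0 = 1. Proof. by []. Qed.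
Lemma H1 : H 1 = 2%:R *: 'X. Proof. by []. Qed.
Lemma HSS n : H n.+2 = 2%:R *: ('X * H n.+1) - (2 * n.+1)%:R *: H n.
Proof.
rewrite /hermiteH /=; have := hpair2 n; rewrite /hermiteH.
by case: (hermite_pair R n) => a b /= ->.
Qed.

Lemma derivH n : (H n.+1)^`() = (2 * n.+1)%:R *: H n.
Proof.
elim/ltn_ind: n => -[|[|n]] IH.
- by rewrite H1 H0 derivZ derivX alg_polyC.
- rewrite HSS derivB !derivZ derivM derivX H1 derivZ derivX H0 -polyC1 derivC.
  rewrite -!mul_polyC ?polyCM; ring.
- rewrite HSS derivB !derivZ derivM derivX mul1r IH // IH // HSS.
  rewrite -!mul_polyC ?polyCM; ring.
Qed.

Lemma derivnH j l : (H l)^`(j) = if (j <= l)%N then (2 ^ j * l ^_ j)%:R *: H (l - j) else 0.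
Proof.
elim: j => [|j IHj]; first by rewrite derivn0 ffactn0 muln1 expn0 scale1r subn0.
rewrite derivnS IHj; case: (ltngtP j l) => hjl.
- rewrite derivZ -(subnSK hjl) derivH scalerA -natrM subnSK //.
  by rewrite ffactnSr expnS mulnCA -!mulnA mulnCA mulnA.
- by rewrite deriv0.
- by rewrite hjl subnn H0 derivZ -polyC1 derivC scaler0.
Qed.

Lemma H0eval_odd k : (H k.*2.+1).[0] = 0.
Proof.
elim: k => [|k IH]; first by rewrite H1 hornerZ hornerX mulr0.
by rewrite doubleS HSS hornerD hornerN !hornerZ IH (mulrC 'X) hornerMX !mulr0 subr0.
Qed.

Lemma H0eval_even_sq k : (H k.*2).[0] ^+ 2 = (4 ^ k * (k.*2)`!)%:R * \prod_(i < k) ((i.*2.+1)%:R / (i.*2.+2)%:R).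
Proof.
elim: k => [|k IH]; first by rewrite H0 hornerE big_ord0 expr1n mulr1.
rewrite doubleS HSS hornerD hornerN !hornerZ (mulrC 'X) hornerMX !mulr0 sub0r sqrrN exprMn IH big_ord_recr /=.
rewrite !factS !natrM expnS !natrM; field; rewrite gt_eqF //; have := ler0n R k.*2; lra.
Qed.


Definition cc (k : nat) : R := \prod_(i < k) ((i.*2.+1)%:R / (i.*2.+2)%:R).
Definition bb (j l : nat) : R := ((hermite_on R l)^`(j)).[0] ^+ 2.
Definition aa (j k : nat) : R := 2%:R ^+ j / Num.sqrt pi * ((j + k.*2) ^_ j)%:R * cc k.

Lemma sqrtpi_gt0 : 0 < Num.sqrt (pi : R).
Proof. by rewrite sqrtr_gt0 pi_gt0. Qed.

Lemma bbE j l : bb j l = ((2 ^ j * l ^_ j)%:R) ^+ 2 * (H (l - j)).[0] ^+ 2 / (2%:R ^+ l * (l`!)%:R * Num.sqrt pi) *+ (j <= l)%N.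
Proof.
rewrite /bb /hermite_on derivnZ derivnH; case: leqP => hjl; last first.
  by rewrite scaler0 horner0 expr0n.
rewrite !hornerZ mulr1n !exprMn exprVn sqr_sqrtr; last first.
  by rewrite !mulr_ge0 ?sqrtr_ge0 // exprn_ge0.
by rewrite mulrC mulrA.
Qed.

Lemma bb_small j l : (l < j)%N -> bb j l = 0.
Proof. by move=> h; rewrite bbE leqNgt h mulr0n. Qed.

Lemma bb_odd j k : bb j (j + k.*2.+1) = 0.
Proof. by rewrite bbE addKn H0eval_odd expr0n /= mulr0 mul0r mul0rn. Qed.

Lemma bb_even j k : bb j (j + k.*2) = aa j k.
Proof.
rewrite bbE addKn leq_addr mulr1n H0eval_even_sq /aa -/(cc k).
have ff : ((j + k.*2)`! = (j + k.*2) ^_ j * (k.*2)`!)%N.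
  by rewrite -(ffact_fact (leq_addr k.*2 j)) addKn.
rewrite ff exprD -!natrX -!natrM.
have e4 : (4 ^ k = 2 ^ k.*2)%N by rewrite -mul2n expnM.
rewrite e4 !natrM !natrX.
have h1 : ((j + k.*2) ^_ j)%:R != 0 :> R by rewrite pnatr_eq0 -lt0n ffact_gt0 leq_addr.
have h2 : ((k.*2)`!)%:R != 0 :> R by rewrite pnatr_eq0 -lt0n fact_gt0.
have h3 : Num.sqrt pi != 0 :> R by rewrite gt_eqF // sqrtpi_gt0.
field; rewrite h1 h2 h3 /= !expf_neq0 //.
Qed.

Lemma sum_bb j i : \sum_(l < j + i.*2) bb j l = \sum_(k < i) aa j k.
Proof.
elim: i => [|i IH].
  rewrite addn0 big_ord0; apply: big1 => l _; exact: bb_small.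
rewrite doubleS !addnS !big_ord_recr /= IH -addnS bb_odd bb_even addr0.
by [].
Qed.


Definition AA (j i : nat) : R := \sum_(k < i) aa j k.

Lemma lambda_tildeE (M : R) j n : lambda_tilde M j n =
  (2 * (j + 2 * n))%:R + M * \sum_(i < n) (4 * AA j i.+1).
Proof.
rewrite /lambda_tilde /lambdaH; congr (_ + M * _).
rewrite big_add1 /= big_mkord; apply: eq_bigr => i _.
have -> : (j + 2 * i.+1 - 2 = j + 2 * i)%N by lia.
have -> : (2 * (j + 2 * i.+1) = 2 * (j + 2 * i) + 4)%N by lia.
rewrite natrD addrAC subrr add0r.
rewrite /Kjj; congr (_ * _).
have e : ((j + 2 * i.+1 - 1).+1 = j + (i.+1).*2)%N by lia.
by rewrite e sum_bb.
Qed.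

End Herm.

Set Implicit Arguments. Unset Strict Implicit. Unset Printing Implicit Defensive.

Section Wallis.
Variable R : realType.

Fixpoint Sf (n : nat) : R -> R :=
  match n with
  | 0 => id
  | 1 => cst 1 - (@cos R)
  | (m.+1 as k).+1 => (- (k.+1%:R)^-1) *: ((@sin R) ^+ k * (@cos R)) + (k%:R / k.+1%:R) *: Sf m
  end.

Lemma scaleRE (a b : R) : a *: b = a * b. Proof. by []. Qed.

Lemma Sf_aux (m : nat) (s : R) : - m.+2%:R^-1 * (s ^+ m.+1 * - s + m.+1%:R * s ^+ m * (1 - s ^+ 2)) + m.+1%:R / m.+2%:R * s ^+ m = s ^+ m.+2.
Proof. rewrite !exprSr; set t := s ^+ m; field; by rewrite -natrD pnatr_eq0. Qed.

Lemma Sf_derive n (x : R) : is_derive x (1:R) (Sf n) (sin x ^+ n).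
Proof.
elim/ltn_ind: n x => -[|[|m]] IH x /=.
- by rewrite expr0; apply: is_derive_id.
- by apply: is_derive_eq; rewrite sub0r opprK expr1.
- have IHm := IH m (ltnW (ltnSn _)).
  apply: is_derive_eq; rewrite exprfctE !scaleRE.
  have hc : cos x ^+ 2 = 1 - sin x ^+ 2 by rewrite -(cos2Dsin2 x) addrK.
  move: hc; set c := cos x; set s := sin x => hc.
  have -> : c * (m.+1%:R * s ^+ m * c) = m.+1%:R * s ^+ m * c ^+ 2 by ring.
  rewrite hc; exact: Sf_aux.
Qed.

Lemma Sf0 n : Sf n 0 = 0.
Proof.
elim/ltn_ind: n => -[|[|m]] IH //=; rewrite !fctE ?scaleRE ?cos0 ?sin0 ?subrr //.
by rewrite expr0n /= mul0r mulr0 add0r IH // mulr0.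
Qed.

Definition II n := Sf n (pi / 2).

Lemma II0 : II 0 = pi / 2. Proof. by []. Qed.
Lemma II1 : II 1 = 1. Proof. by rewrite /II /= !fctE cos_pihalf subr0. Qed.
Lemma IISS m : II m.+2 = m.+1%:R / m.+2%:R * II m.
Proof. by rewrite /II /= !fctE !scaleRE cos_pihalf !mulr0 add0r. Qed.

Lemma II_decr n : II n.+1 <= II n.
Proof.
set D := Sf n - Sf n.+1.
have dD x : is_derive x (1:R) D (sin x ^+ n - sin x ^+ n.+1).
  by apply: is_deriveB; apply: Sf_derive.
have : D 0 <= D (pi / 2).
  apply: (@ger0_derive1_ndecr _ D 0 (pi/2)).
  - by move=> x _; apply: ex_derive; apply: dD.
  - move=> x; rewrite in_itv /= => /andP[x0 x1].
    rewrite derive1E (@derive_val _ _ _ _ _ _ _ (dD x)).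
    have s0 : 0 < sin x by apply: sin_gt0_pihalf; rewrite x0 x1.
    have s1 := sin_le1 x.
    rewrite exprS -{1}(mul1r (sin x ^+ n)) -mulrBl mulr_ge0 ?subr_ge0 //.
    by rewrite exprn_ge0 // ltW.
  - by apply: derivable_within_continuous => x _; apply: ex_derive; apply: dD.
  - by [].
  - by rewrite divr_ge0 ?pi_ge0.
  - by [].
by rewrite /D !fctE !Sf0 subr0 subr_ge0.
Qed.


Local Notation cc := (cc R).

Lemma cc_gt0 k : 0 < cc k.
Proof. by apply: prodr_gt0 => i _; rewrite divr_gt0 ?ltr0Sn. Qed.

Ltac nzt := rewrite ?(gt_eqF (cc_gt0 _)) ?(gt_eqF (pi_gt0 _)) -?natrD ?[1 + _]addrC ?natr1 ?pnatr_eq0 //=.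

Lemma ccS k : cc k.+1 = cc k * ((k.*2.+1)%:R / (k.*2.+2)%:R).
Proof. by rewrite /cc big_ord_recr. Qed.


Lemma II_even k : II k.*2 = pi / 2 * cc k.
Proof.
elim: k => [|k IH]; first by rewrite /cc big_ord0 mulr1.
by rewrite doubleS IISS IH ccS; ring.
Qed.

Lemma II_odd k : II k.*2.+1 = ((k.*2.+1)%:R * cc k)^-1.
Proof.
elim: k => [|k IH]; first by rewrite /cc big_ord0 mulr1 II1 invr1.
rewrite doubleS IISS IH ccS.
have h1 := cc_gt0 k.
field; nzt.
Qed.

Lemma wallis_lo k : 2 <= pi * (k.*2.+1)%:R * cc k ^+ 2.
Proof.
have := II_decr k.*2; rewrite II_even II_odd.
have h1 := cc_gt0 k; have hp := pi_gt0 R.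
have ha : 0 < (k.*2.+1)%:R * cc k by rewrite mulr_gt0 // ltr0Sn.
rewrite -[(_ * cc k)^-1]div1r ler_pdivrMr // => h.
have e : (pi / 2 * cc k) * ((k.*2.+1)%:R * cc k) = (pi * (k.*2.+1)%:R * cc k ^+ 2) / 2 by ring.
move: h; rewrite e; lra.
Qed.

Lemma wallis_up k : pi * k%:R * cc k ^+ 2 <= 1.
Proof.
case: k => [|k]; first by rewrite mulr0 mul0r ler01.
have := II_decr k.*2.+1; rewrite -doubleS II_even II_odd ccS.
have h1 := cc_gt0 k; have hp := pi_gt0 R.
have ha : 0 < (k.*2.+1)%:R * cc k by rewrite mulr_gt0 // ltr0Sn.
rewrite -[(_ * cc k)^-1]div1r ler_pdivlMr // => h.
have eb : (k.*2.+2)%:R = 2 * k.+1%:R :> R by rewrite -doubleS -mul2n natrM.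
rewrite eb in h *.
have e : (pi / 2 * (cc k * ((k.*2.+1)%:R / (2 * k.+1%:R)))) * ((k.*2.+1)%:R * cc k) =
   pi * k.+1%:R * (cc k * ((k.*2.+1)%:R / (2 * k.+1%:R))) ^+ 2.
  by field; nzt.
by rewrite -e.
Qed.

End Wallis.

Set Implicit Arguments. Unset Strict Implicit. Unset Printing Implicit Defensive.

Section Stolz.
Variable R : realType.

Lemma stolz0 (d b : R^nat) :
  0 <= b 0 -> (forall n, b n < b n.+1) ->
  (fun n => (b n)^-1) @ \oo --> 0 ->
  (fun n => (d n.+1 - d n) / (b n.+1 - b n)) @ \oo --> 0 ->
  (fun n => d n / b n) @ \oo --> 0.
Proof.
move=> b0 binc binv hd.
have bmono : forall m k, b m <= b (m + k)%N.
  move=> m; elim=> [|k IH]; first by rewrite addn0.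
  by rewrite addnS (le_trans IH) // ltW.
have bpos : forall n, (0 < n)%N -> 0 < b n.
  move=> [|n] // _; apply: (le_lt_trans b0); apply: (le_lt_trans _ (binc n)).
  by have := bmono 0%N n.
apply/cvgrPdist_le => e e0.
have e20 : 0 < e / 2 by rewrite divr_gt0.
move/cvgrPdist_le : hd => /(_ _ e20) hd.
have [N _ hN] := hd.
have step : forall n, (N <= n)%N -> `|d n.+1 - d n| <= e / 2 * (b n.+1 - b n).
  move=> n hn; have := hN n hn.
  have db : 0 < b n.+1 - b n by rewrite subr_gt0.
  by rewrite sub0r normrN normrM [`|(_)^-1|]gtr0_norm ?invr_gt0 // ler_pdivrMr.
have tele : forall k, `|d (N + k)%N - d N| <= e / 2 * (b (N + k)%N - b N).
  elim => [|k IH]; first by rewrite addn0 !subrr normr0 mulr0.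
  rewrite addnS; have := step (N + k)%N (leq_addr _ _).
  have -> : d (N + k)%N.+1 - d N = (d (N + k)%N.+1 - d (N + k)%N) + (d (N + k)%N - d N) by ring.
  move=> h1; apply: (le_trans (ler_normD _ _)).
  have -> : e / 2 * (b (N + k)%N.+1 - b N) = e / 2 * (b (N + k)%N.+1 - b (N + k)%N) + e / 2 * (b (N + k)%N - b N) by ring.
  exact: lerD.
have eps0 : 0 < e / 2 / (`|d N| + 1) by rewrite divr_gt0 // ltr_wpDl.
move/cvgrPdist_le : binv => /(_ _ eps0) binv.
near=> n.
have hn : (N.+1 <= n)%N by near: n; exact: nbhs_infty_ge.
have hbn : 0 < b n by apply: bpos; exact: leq_trans hn.
have hinv : `|0 - (b n)^-1| <= e / 2 / (`|d N| + 1) by near: n; exact: binv.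
rewrite sub0r normrN in hinv.
have [k hk] : exists k, n = (N + k)%N by exists (n - N)%N; lia.
have hdn : `|d n| <= `|d N| + e / 2 * b n.
  have := tele k; rewrite -hk => h.
  have -> : d n = (d n - d N) + d N by ring.
  apply: (le_trans (ler_normD _ _)); rewrite addrC lerD2l (le_trans h) //.
  rewrite ler_wpM2l ?(ltW e20) // lerBlDr lerDl.
  by apply: (le_trans b0); have := bmono 0%N N; rewrite add0n.
rewrite sub0r normrN normrM [`|(_)^-1|]gtr0_norm ?invr_gt0 //.
rewrite ler_pdivrMr // (le_trans hdn) //.
rewrite ler_pdivlMr ?ltr_wpDl // gtr0_norm ?invr_gt0 // mulrC ler_pdivrMr // in hinv.
lra.
Unshelve. all: end_near.
Qed.

Lemma stolz (a b : R^nat) (L : R) :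
  0 <= b 0 -> (forall n, b n < b n.+1) ->
  (fun n => (b n)^-1) @ \oo --> 0 ->
  (fun n => (a n.+1 - a n) / (b n.+1 - b n)) @ \oo --> L ->
  (fun n => a n / b n) @ \oo --> L.
Proof.
move=> b0 binc binv h.
have bpos : forall n, 0 < b n.+1.
  move=> n; elim: n => [|n IH]; first exact: le_lt_trans b0 (binc 0%N).
  exact: lt_trans IH (binc _).
have h0 : (fun n => (a n - L * b n) / b n) @ \oo --> 0.
  apply: stolz0 => //.
  have -> : (fun n => ((a n.+1 - L * b n.+1) - (a n - L * b n)) / (b n.+1 - b n)) =
            (fun n => (a n.+1 - a n) / (b n.+1 - b n) - L).
    apply/funext => n; have : b n.+1 - b n != 0 by rewrite subr_eq0 gt_eqF.
    by move=> hn; field.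
  by rewrite -(subrr L); apply: cvgB => //; exact: cvg_cst.
rewrite -cvg_shiftS.
have -> : [sequence a n.+1 / b n.+1]_n = (fun n => (a n.+1 - L * b n.+1) / b n.+1 + L).
  apply/funext => n /=; have := bpos n; move=> /gt_eqF/negbT hn; by field.
rewrite -cvg_shiftS in h0.
apply: cvg_trans; first exact: (cvgD h0 (cvg_cst L)).
by rewrite add0r.
Qed.
End Stolz.

Set Implicit Arguments. Unset Strict Implicit. Unset Printing Implicit Defensive.
Unset Implicit Arguments.

Section Lims.
Variable R : realType.
Local Notation xx n := ((n.+1)%:R : R).

Ltac nzt := rewrite ?[1 + _]addrC -?natrD ?natr1 ?pnatr_eq0 ?andbT //=.

Lemma xx_neq0 n : xx n != 0. Proof. by rewrite pnatr_eq0. Qed.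

Lemma cvg_r : (fun n => (xx n)^-1) @ \oo --> 0.
Proof. exact: (@cvg_harmonic R). Qed.

Lemma cvg_lin (a b : R) : (fun n => (a + b * xx n) / xx n) @ \oo --> b.
Proof.
have -> : (fun n => (a + b * xx n) / xx n) = (fun n => b + a * (xx n)^-1).
  by apply/funext => n; have h := xx_neq0 n; field.
apply: cvg_trans; first exact: (cvgD (cvg_cst b) (cvgM (cvg_cst a) cvg_r)).
by rewrite mulr0 addr0.
Qed.

Lemma cvg_ratio : (fun n => (xx n + 1) / xx n) @ \oo --> (1:R).
Proof.
have -> : (fun n => (xx n + 1) / xx n) = (fun n => (1 + 1 * xx n) / xx n).
  by apply/funext => n; rewrite mul1r addrC.
exact: cvg_lin.
Qed.

Lemma cvg_ratio_pow m : (fun n => ((xx n + 1) / xx n) ^+ m) @ \oo --> (1:R).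
Proof.
elim: m => [|m IH].
  under eq_fun do rewrite expr0. exact: cvg_cst.
under eq_fun do rewrite exprS.
apply: cvg_trans; first apply: (cvgM _ IH).
  exact: cvg_ratio.
by rewrite mulr1.
Qed.


Definition Fj (m i : nat) : R := ((m + i.*2) ^_ m)%:R.

Lemma FjS m i : Fj m.+1 i = (m.+1%:R + 2 * i%:R) * Fj m i.
Proof. by rewrite /Fj addSn ffactSS natrM -mul2n -addSn natrD natrM. Qed.

Lemma cvg_F m : (fun n => Fj m n.+1 / xx n ^+ m) @ \oo --> (2 ^+ m : R).
Proof.
elim: m => [|m IH].
  have -> : (fun n => Fj 0 n.+1 / xx n ^+ 0) = (fun=> 1).
    by apply/funext => n; rewrite /Fj ffactn0 expr0 divr1.
  by rewrite expr0; exact: cvg_cst.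
have -> : (fun n => Fj m.+1 n.+1 / xx n ^+ m.+1) =
   (fun n => (m.+1%:R + 2 * xx n) / xx n * (Fj m n.+1 / xx n ^+ m)).
  apply/funext => n; rewrite FjS exprS; have h := xx_neq0 n.
  set y := xx n ^+ m; have : y != 0 by rewrite expf_neq0.
  by move=> hy; field; rewrite (negbTE hy); nzt.
rewrite exprS; apply: cvgM => //; exact: cvg_lin.
Qed.

Definition Dd (m : nat) (x : R) := (x + 1) ^+ m * (x + 2^-1) - x ^+ m.+1.
Definition Qq (m : nat) (x : R) := x * ((x + 1) ^+ m - x ^+ m) / x ^+ m.

Lemma QqS m x : x != 0 -> Qq m.+1 x = (x + 1) / x * Qq m x + 1.
Proof.
move=> hx; rewrite /Qq !exprS; set u := (x + 1) ^+ m; set v := x ^+ m.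
have : v != 0 by rewrite expf_neq0.
by move=> hv; field; rewrite (negbTE hv); nzt.
Qed.

Lemma cvg_Q m : (fun n => Qq m (xx n)) @ \oo --> (m%:R : R).
Proof.
elim: m => [|m IH].
  have -> : (fun n => Qq 0 (xx n)) = (fun=> 0).
    by apply/funext => n; rewrite /Qq !expr0 subrr mulr0 mul0r.
  exact: cvg_cst.
have -> : (fun n => Qq m.+1 (xx n)) = (fun n => (xx n + 1) / xx n * Qq m (xx n) + 1).
  by apply/funext => n; rewrite QqS // xx_neq0.
apply: cvg_trans; first exact: (cvgD (cvgM cvg_ratio IH) (cvg_cst (1:R))).
by rewrite mul1r -natr1.
Qed.

Lemma cvg_D m : (fun n => Dd m (xx n) / xx n ^+ m) @ \oo --> (m%:R + 2^-1 : R).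
Proof.
have -> : (fun n => Dd m (xx n) / xx n ^+ m) =
   (fun n => Qq m (xx n) + ((xx n + 1) / xx n) ^+ m * 2^-1).
  apply/funext => n; rewrite /Dd /Qq expr_div_n exprS; have h := xx_neq0 n.
  set u := (xx n + 1) ^+ m; set v := xx n ^+ m; have : v != 0 by rewrite expf_neq0.
  by move=> hv; field; rewrite (negbTE hv); nzt.
apply: cvg_trans; first exact: (cvgD (cvg_Q m) (cvgM (cvg_ratio_pow m) (cvg_cst (2^-1 : R)))).
by rewrite mul1r.
Qed.

Lemma cvg_E m : (fun n => (xx n + 1) ^+ m * (xx n + 2^-1) / xx n ^+ m.+1) @ \oo --> (1 : R).
Proof.
have -> : (fun n => (xx n + 1) ^+ m * (xx n + 2^-1) / xx n ^+ m.+1) =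
   (fun n => ((xx n + 1) / xx n) ^+ m * ((2^-1 + 1 * xx n) / xx n)).
  apply/funext => n; rewrite expr_div_n exprS; have h := xx_neq0 n.
  set u := (xx n + 1) ^+ m; set v := xx n ^+ m; have : v != 0 by rewrite expf_neq0.
  by move=> hv; field; rewrite (negbTE hv); nzt.
apply: cvg_trans; first exact: (cvgM (cvg_ratio_pow m) (cvg_lin _ _)).
by rewrite mul1r.
Qed.

End Lims.

Ltac nzt := rewrite ?[1 + _]addrC -?natrD ?natr1 ?pnatr_eq0 ?andbT //=.

Section Main.
Variable R : realType.
Local Notation xx n := ((n.+1)%:R : R).
Local Notation cc := (cc R).

Lemma cvg_sqrt (u : R^nat) (l : R) : u @ \oo --> l -> (fun n => Num.sqrt (u n)) @ \oo --> Num.sqrt l.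
Proof. move=> h; apply: (cvg_comp _ _ h); exact: sqrt_continuous. Qed.

Lemma cvgXn (u : R^nat) (l : R) m : u @ \oo --> l -> (fun n => u n ^+ m) @ \oo --> l ^+ m.
Proof.
move=> h; elim: m => [|m IH].
  under eq_fun do rewrite expr0. rewrite expr0; exact: cvg_cst.
under eq_fun do rewrite exprS. rewrite exprS; exact: cvgM.
Qed.

Lemma cvg_piW : (fun n => pi * xx n * cc n.+1 ^+ 2) @ \oo --> (1:R).
Proof.
apply: (@squeeze_cvgr _ _ _ _ (fun n => (xx n) / (xx n + 2^-1)) (fun=> 1)).
- near=> n.
  have hp := pi_gt0 R; have hc := cc_gt0 R n.+1.
  have lo := wallis_lo R n.+1; have up := wallis_up R n.+1.
  rewrite up andbT.
  have e : (n.+1.*2.+1)%:R = 2 * (xx n + 2^-1) :> R.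
    by rewrite -addn1 natrD -mul2n natrM; field.
  rewrite e in lo.
  have hx : 0 < xx n + 2^-1 by rewrite addr_gt0.
  rewrite ler_pdivrMr //.
  have : 2 <= 2 * (pi * (xx n + 2^-1) * cc n.+1 ^+ 2).
    by rewrite (le_trans lo) // le_eqVlt; apply/orP; left; apply/eqP; ring.
  rewrite -[X in X <= _ -> _](mulr1 2) ler_pM2l // => h.
  have : xx n * 1 <= xx n * (pi * (xx n + 2^-1) * cc n.+1 ^+ 2).
    by rewrite ler_pM2l.
  by rewrite mulr1 => h2; rewrite (le_trans h2) // le_eqVlt; apply/orP; left; apply/eqP; ring.
- have -> : (fun n => xx n / (xx n + 2^-1)) = (fun n => ((2^-1 + 1 * xx n) / xx n)^-1).
    apply/funext => n; have h := xx_neq0 R n.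
    have hx : xx n + 2^-1 != 0 by rewrite gt_eqF // addr_gt0.
    rewrite invf_div; congr (_ / _); ring.
  apply: cvg_trans; first exact: (cvgV (oner_neq0 R) (cvg_lin R _ _)).
  by rewrite invr1.
- exact: cvg_cst.
Unshelve. all: end_near.
Qed.


Lemma cvg_W : (fun n => xx n * cc n.+1 ^+ 2) @ \oo --> (pi^-1 : R).
Proof.
have hp : (pi : R) != 0 by rewrite gt_eqF // pi_gt0.
have -> : (fun n => xx n * cc n.+1 ^+ 2) = (fun n => pi^-1 * (pi * xx n * cc n.+1 ^+ 2)).
  by apply/funext => n /=; rewrite !mulrA mulVf // mul1r.
apply: cvg_trans; first exact: (cvgM (cvg_cst (pi^-1 : R)) cvg_piW).
by rewrite mulr1.
Qed.

Lemma cvg_inv_xc : (fun n => (xx n * cc n.+1)^-1) @ \oo --> (0:R).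
Proof.
have hp : (pi : R) != 0 by rewrite gt_eqF // pi_gt0.
have -> : (fun n => (xx n * cc n.+1)^-1) =
    (fun n => Num.sqrt ((xx n)^-1 * (xx n * cc n.+1 ^+ 2)^-1)).
  apply/funext => n; have hc := cc_gt0 R n.+1; have h := xx_neq0 R n.
  have e : (xx n)^-1 * (xx n * cc n.+1 ^+ 2)^-1 = ((xx n * cc n.+1)^-1) ^+ 2.
    by field; rewrite (gt_eqF hc); nzt.
  by rewrite e sqrtr_sqr ger0_norm // invr_ge0 mulr_ge0 // ltW.
rewrite -sqrtr0; apply: cvg_sqrt.
have hpi : (pi^-1 : R) != 0 by rewrite invr_eq0.
apply: cvg_trans; first exact: (cvgM (cvg_r R) (cvgV hpi cvg_W)).
by rewrite mul0r.
Qed.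

Variable j : nat.

Definition B1 (i : nat) : R := i%:R ^+ j.+1 * cc i.
Definition B2 (i : nat) : R := i%:R ^+ j.+2 * cc i.

Lemma cvg_invB1 : (fun n => (B1 n)^-1) @ \oo --> (0:R).
Proof.
rewrite -cvg_shiftS.
have -> : [sequence (B1 n.+1)^-1]_n = (fun n => (xx n)^-1 ^+ j * (xx n * cc n.+1)^-1).
  apply/funext => n /=; rewrite /B1 exprS exprVn; have hc := cc_gt0 R n.+1; have h := xx_neq0 R n.
  set u := xx n ^+ j; have : u != 0 by rewrite expf_neq0.
  by move=> hu; field; rewrite (gt_eqF hc) hu; nzt.
apply: cvg_trans; first exact: (cvgM (cvgXn _ _ j (cvg_r R)) cvg_inv_xc).
by rewrite mulr0.
Qed.

Lemma cvg_invB2 : (fun n => (B2 n)^-1) @ \oo --> (0:R).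
Proof.
rewrite -cvg_shiftS.
have -> : [sequence (B2 n.+1)^-1]_n = (fun n => (xx n)^-1 * (B1 n.+1)^-1).
  by apply/funext => n /=; rewrite /B2 /B1 -invfM [in LHS]exprS mulrA.
have h := cvg_invB1; rewrite -cvg_shiftS in h.
apply: cvg_trans; first exact: (cvgM (cvg_r R) h).
by rewrite mulr0.
Qed.


Lemma Dd_gt0 m (y : R) : 0 <= y -> 0 < Dd R m y.
Proof.
move=> y0; rewrite /Dd subr_gt0 exprSr.
have h1 : y ^+ m <= (y + 1) ^+ m by rewrite lerXn2r // ?nnegrE ?addr_ge0 // lerDl.
have h2 : 0 < (y + 1) ^+ m by rewrite exprn_gt0 // ltr_wpDl.
apply: (le_lt_trans (ler_wpM2r y0 h1)).
by rewrite ltr_pM2l // ltrDl invr_gt0.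
Qed.

Lemma Bm_S m i : (i.+1)%:R ^+ m.+1 * cc i.+1 = cc i * ((i%:R + 1) ^+ m * (i%:R + 2^-1)).
Proof.
rewrite ccS exprS -natr1.
have -> : (i.*2.+1)%:R = 2 * (i%:R + 2^-1) :> R by rewrite -addn1 natrD -mul2n natrM; field.
have -> : (i.*2.+2)%:R = 2 * (i%:R + 1) :> R by rewrite -addn2 natrD -mul2n natrM; field.
have h : i%:R + 1 != 0 :> R by rewrite natr1 pnatr_eq0.
set u := (i%:R + 1) ^+ m; field; by rewrite h.
Qed.

Lemma Bm_d m i : (i.+1)%:R ^+ m.+1 * cc i.+1 - i%:R ^+ m.+1 * cc i = cc i * Dd R m i%:R.
Proof. by rewrite Bm_S /Dd; ring. Qed.

Lemma B1_incr i : B1 i < B1 i.+1.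
Proof. by rewrite -subr_gt0 /B1 Bm_d mulr_gt0 ?cc_gt0 // Dd_gt0. Qed.
Lemma B2_incr i : B2 i < B2 i.+1.
Proof. by rewrite -subr_gt0 /B2 Bm_d mulr_gt0 ?cc_gt0 // Dd_gt0. Qed.
Lemma B1_0 : 0 <= B1 0. Proof. by rewrite /B1 expr0n mul0r. Qed.
Lemma B2_0 : 0 <= B2 0. Proof. by rewrite /B2 expr0n mul0r. Qed.

Definition L1 : R := 2 ^+ j / Num.sqrt pi * 2 ^+ j / (j%:R + 2^-1).

Lemma cvg_AB1 : (fun i => AA R j i / B1 i) @ \oo --> L1.
Proof.
apply: stolz; [exact: B1_0 | exact: B1_incr | exact: cvg_invB1 |].
have -> : (fun n => (AA R j n.+1 - AA R j n) / (B1 n.+1 - B1 n)) =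
          (fun n => aa R j n / (cc n * Dd R j n%:R)).
  apply/funext => n; rewrite /B1 Bm_d /AA big_ord_recr /=.
  by rewrite addrAC subrr add0r.
rewrite -cvg_shiftS.
have -> : [sequence aa R j n.+1 / (cc n.+1 * Dd R j n.+1%:R)]_n =
   (fun n => (2 ^+ j / Num.sqrt pi) * (Fj R j n.+1 / xx n ^+ j) * (Dd R j (xx n) / xx n ^+ j)^-1).
  apply/funext => n /=; rewrite /aa /Fj.
  have hc := cc_gt0 R n.+1; have hD := Dd_gt0 j _ (ler0n R n.+1).
  have hs := sqrtpi_gt0 R; have hx := xx_neq0 R n.
  set u := xx n ^+ j; have hu : u != 0 by rewrite expf_neq0.
  field; by rewrite hu (gt_eqF hD) (gt_eqF hc) (gt_eqF hs).
have hD : (j%:R + 2^-1 : R) != 0 by rewrite gt_eqF // ltr_wpDl.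
apply: cvg_trans; first exact: (cvgM (cvgM (cvg_cst _) (cvg_F R j)) (cvgV hD (cvg_D R j))).
by rewrite /L1.
Qed.


Variable M : R.
Definition Lam n := lambda_tilde M j n.

Lemma dLam i : Lam i.+1 - Lam i = 4 + M * (4 * AA R j i.+1).
Proof.
rewrite /Lam !lambda_tildeE big_ord_recr /=.
have -> : (2 * (j + 2 * i.+1) = 2 * (j + 2 * i) + 4)%N by lia.
rewrite natrD; ring.
Qed.

Definition L2 : R := 4 * M * L1 / ((j.+1)%:R + 2^-1).

Lemma cvg_LB2 : (fun n => Lam n / B2 n) @ \oo --> L2.
Proof.
apply: stolz; [exact: B2_0 | exact: B2_incr | exact: cvg_invB2 |].
have -> : (fun n => (Lam n.+1 - Lam n) / (B2 n.+1 - B2 n)) =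
          (fun n => (4 + M * (4 * AA R j n.+1)) / (cc n * Dd R j.+1 n%:R)).
  by apply/funext => n; rewrite /B2 Bm_d dLam.
rewrite -cvg_shiftS.
have -> : [sequence (4 + M * (4 * AA R j n.+2)) / (cc n.+1 * Dd R j.+1 n.+1%:R)]_n =
   (fun n => (4 * (B1 n.+2)^-1 + 4 * M * (AA R j n.+2 / B1 n.+2)) *
      (((xx n + 1) ^+ j * (xx n + 2^-1) / xx n ^+ j.+1) / (Dd R j.+1 (xx n) / xx n ^+ j.+1))).
  apply/funext => n /=; rewrite /B1 Bm_S.
  have hc := cc_gt0 R n.+1; have hD := Dd_gt0 j.+1 _ (ler0n R n.+1).
  have hx := xx_neq0 R n.
  have hP : 0 < (xx n + 1) ^+ j * (xx n + 2^-1).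
    by rewrite mulr_gt0 // ?exprn_gt0 // ?addr_gt0 // ltr_wpDl.
  set u := xx n ^+ j.+1; have hu : u != 0 by rewrite expf_neq0.
  set P := (xx n + 1) ^+ j * (xx n + 2^-1).
  field; by rewrite hu (gt_eqF hD) (gt_eqF hc) (gt_eqF hP).
have h1 := cvg_invB1; rewrite -2!cvg_shiftS in h1.
have h2 := cvg_AB1; rewrite -2!cvg_shiftS in h2.
have hD : ((j.+1)%:R + 2^-1 : R) != 0 by rewrite gt_eqF // ltr_wpDl.
apply: cvg_trans.
  exact: (cvgM (cvgD (cvgM (cvg_cst (4:R)) h1) (cvgM (cvg_cst (4 * M)) h2)) (cvgM (cvg_E R j) (cvgV hD (cvg_D R j.+1)))).
by rewrite mulr0 add0r mul1r /L2 mulrA.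
Qed.


Lemma powR_half (x : R) : 0 < x -> powR x (j%:R + 3 / 2) = x ^+ j.+1 * Num.sqrt x.
Proof.
move=> x0.
have -> : (j%:R + 3 / 2 : R) = (j.+1)%:R + 2^-1 by rewrite -natr1; field.
rewrite powRD; last by rewrite (gt_eqF x0) implybT.
by rewrite powR_mulrn ?ltW // powR12_sqrt ?ltW.
Qed.

Lemma aux_eq (s c l u : R) : 0 < s -> 0 < c -> u != 0 ->
  l / (u * s) = l / (u * s ^+ 2 * c) * (s * c).
Proof. by move=> hs hc hu; field; rewrite hu (gt_eqF hs) (gt_eqF hc). Qed.

Lemma cvg_final : (fun n => Lam n / powR (n%:R : R) (j%:R + 3 / 2)) @ \oo --> L2 * Num.sqrt (pi^-1).
Proof.
rewrite -cvg_shiftS.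
have -> : [sequence Lam n.+1 / powR (n.+1%:R : R) (j%:R + 3 / 2)]_n =
   (fun n => Lam n.+1 / B2 n.+1 * Num.sqrt (xx n * cc n.+1 ^+ 2)).
  apply/funext => n /=.
  have hx : 0 < xx n by rewrite ltr0Sn.
  have hc := cc_gt0 R n.+1.
  rewrite powR_half // sqrtrM ?ltW // sqrtr_sqr (gtr0_norm hc) /B2.
  have hs : 0 < Num.sqrt (xx n) by rewrite sqrtr_gt0.
  have e : xx n ^+ j.+2 = xx n ^+ j.+1 * Num.sqrt (xx n) ^+ 2.
    by rewrite sqr_sqrtr ?ltW // exprS mulrC.
  rewrite e; apply: aux_eq => //; by rewrite expf_neq0 // gt_eqF.
have h := cvg_LB2; rewrite -cvg_shiftS in h.
exact: (cvgM h (cvg_sqrt _ _ cvg_W)).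
Qed.

End Main.

Ltac nzl := repeat (apply/andP; split); apply/eqP => ?; lra.

Lemma const_eq (R : realType) (M : R) (j : nat) :
  L2 R j M * Num.sqrt (pi^-1) = 4 * M * (2 ^+ j * 2 ^+ j) / (pi * (j%:R + 2^-1) * (j%:R + 1 + 2^-1)).
Proof.
rewrite /L2 /L1 sqrtrV ?pi_ge0 //.
have -> : (j.+1%:R : R) = j%:R + 1 by rewrite -natr1.
have hs := sqrtpi_gt0 R.
have e : (pi : R) = Num.sqrt pi ^+ 2 by rewrite sqr_sqrtr ?pi_ge0.
rewrite [in RHS]e; set s := Num.sqrt pi; set t := 2 ^+ j.
have h1 : (j%:R + 2^-1 : R) != 0 by rewrite gt_eqF // ltr_wpDl.
have h2 : (j%:R + 1 + 2^-1 : R) != 0 by rewrite gt_eqF // addr_gt0 // ltr_wpDl.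
have := ler0n R j => hj0; field; rewrite (gt_eqF hs) andbT; nzl.
Qed.

Unset Implicit Arguments.
Theorem mainTheorem7 (R : realType) (j : nat) (M : R) (hM : 0 < M) :
  (forall r : nat, j = (2 * r)%N ->
     ((fun n : nat => lambda_tilde M j n / powR (n%:R : R) ((2 * r)%:R + 3 / 2)) : R^nat)
       @ \oo --> (M * 2%:R ^+ (4 * r + 1)
                  / (pi * (r%:R + 3 / 4) * ((2 * r)%:R + 1 / 2)) : R)) /\
  (forall r : nat, j = (2 * r + 1)%N ->
     ((fun n : nat => lambda_tilde M j n / powR (n%:R : R) ((2 * r)%:R + 5 / 2)) : R^nat)
       @ \oo --> (M * 2%:R ^+ (4 * r + 3)
                  / (pi * (r%:R + 5 / 4) * ((2 * r)%:R + 3 / 2)) : R)).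
Proof.
have hp := pi_gt0 R.
split => r hj.
- apply: cvg_trans; first by rewrite -hj; exact: (cvg_final R j M).
  rewrite const_eq hj.
  have -> : (4 * r + 1 = (2 * r + 2 * r).+1)%N by lia.
  rewrite exprS exprD; set t : R := 2 ^+ (2 * r).
  have h1 : ((2 * r)%:R + 2^-1 : R) != 0 by rewrite gt_eqF // ltr_wpDl.
  have h2 : ((2 * r)%:R + 1 + 2^-1 : R) != 0 by rewrite gt_eqF // addr_gt0 // ltr_wpDl.
  have h3 : (r%:R + 3 / 4 : R) != 0 by rewrite gt_eqF // ltr_wpDl.
  have -> : 4 * M * (t * t) / (pi * ((2 * r)%:R + 2^-1) * ((2 * r)%:R + 1 + 2^-1)) =
     M * (2 * (t * t)) / (pi * (r%:R + 3 / 4) * ((2 * r)%:R + 1 / 2)).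
    rewrite natrM; rewrite natrM in h1 h2.
    have := ler0n R r => hr0; field; nzl.
  done.
- have e : ((2 * r)%:R + 5 / 2 : R) = j%:R + 3 / 2 by rewrite hj natrD; field.
  rewrite e.
  apply: cvg_trans; first exact: (cvg_final R j M).
  rewrite const_eq hj.
  have -> : (4 * r + 3 = (2 * r + 1 + (2 * r + 1)).+1)%N by lia.
  rewrite exprS (exprD 2 (2 * r + 1) (2 * r + 1)); set t : R := 2 ^+ (2 * r + 1).
  have h1 : ((2 * r + 1)%:R + 2^-1 : R) != 0 by rewrite gt_eqF // ltr_wpDl.
  have h2 : ((2 * r + 1)%:R + 1 + 2^-1 : R) != 0 by rewrite gt_eqF // addr_gt0 // ltr_wpDl.
  have h3 : (r%:R + 5 / 4 : R) != 0 by rewrite gt_eqF // ltr_wpDl.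
  have h4 : ((2 * r)%:R + 3 / 2 : R) != 0 by rewrite gt_eqF // ltr_wpDl.
  have -> : 4 * M * (t * t) / (pi * ((2 * r + 1)%:R + 2^-1) * ((2 * r + 1)%:R + 1 + 2^-1)) =
     M * (2 * (t * t)) / (pi * (r%:R + 5 / 4) * ((2 * r)%:R + 3 / 2)).
    rewrite natrD natrM; rewrite natrD natrM in h1 h2; rewrite natrM in h4.
    have := ler0n R r => hr0; field; nzl.
  done.
Qed.
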